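(* Let $\mathcal{H}$ be a real or complex Hilbert space, $\mathcal{F}$ a Hilbert space (with Euclidean norm $\|\cdot\|_{\mathcal{F}}$), $\Sigma\subset\mathcal{H}$ a model set which is either a union of subspaces (UoS) or a cone, and $f:\mathcal{H}\to\mathbb{R}\cup\{+\infty\}$ a regularizer with $f(x)<\infty$ for all $x\in\Sigma$. Let $M:\mathcal{H}\to\mathcal{F}$ be a continuous linear operator satisfying the RIP on $\Sigma-\Sigma$ with constant $\delta<\delta_\Sigma(f)$. Then for every $x_0\in\Sigma$, $x_0$ is the unique minimizer of $$\min_{x\in\mathcal{H}} f(x)\quad\text{subject to}\quad Mx=Mx_0 .$$
   Context: The inner product $\langle\cdot,\cdot\rangle$ on $\mathcal{H}$ is Hermitian, $\|x\|_{\mathcal{H}}^2=\langle x,x\rangle$, and $\mathcal{R}e$ denotes real part. $\Sigma$ is a UoS if $t z\in\Sigma$ for all $t\in\mathbb{R}$, $z\in\Sigma$; a cone if $tz\in\Sigma$ for all $t\ge 0$, $z\in\Sigma$. $\Sigma-\Sigma=\{x-x':x,x'\in\Sigma\}$. $M$ has the RIP on $\Sigma-\Sigma$ with constant $\delta$ if $(1-\delta)\|x\|_{\mathcal{H}}^2\le\|Mx\|_{\mathcal{F}}^2\le(1+\delta)\|x\|_{\mathcal{H}}^2$ for all $x\in\Sigma-\Sigma$. Atomic norm: for a set $\mathcal{A}\subset\mathcal{H}$, $\|x\|_{\mathcal{A}}=\inf\{t\ge0: x\in t\cdot\overline{\mathrm{conv}}(\mathcal{A})\}$ (closure in $\mathcal{H}$),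 with $\|x\|_{\mathcal{A}}=+\infty$ if no such $t$ exists. Set $\|\cdot\|_\Sigma:=\|\cdot\|_{\Sigma\cap S(1)}$ where $S(1)=\{x:\|x\|_{\mathcal{H}}=1\}$. Descent set: $\mathcal{T}_f(\Sigma)=\bigcup_{x\in\Sigma}\{z\in\mathcal{H}: f(x+z)\le f(x)\}$. Admissible constant: $\delta_\Sigma(f):=\inf_{z\in\mathcal{T}_f(\Sigma)\setminus\{0\}}\ \sup_{x\in\Sigma\setminus\{0\}}\delta_\Sigma(x,z)$, where, if $\Sigma$ is a UoS, $$\delta_\Sigma(x,z)=\frac{-\mathcal{R}e\langle x,z\rangle}{\|x\|_{\mathcal{H}}\sqrt{\|x+z\|_\Sigma^2-\|x\|_{\mathcal{H}}^2-2\mathcal{R}e\langle x,z\rangle}},$$ and, if $\Sigma$ is a cone (not a UoS), $$\delta_\Sigma(x,z)=\frac{-2\mathcal{R}e\langle x,z\rangle}{\|x+z\|_\Sigma^2-2\mathcal{R}e\langle x,z\rangle}.$$ (If $\|x+z\|_\Sigma=+\infty$ the quotient is read as $0$.) *)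

(* Defs.v *)
From HB Require Import structures.
From mathcomp Require Import all_boot all_order all_algebra sesquilinear.
From mathcomp Require Import all_classical all_reals ereal.
From mathcomp Require Import complex.

Set Implicit Arguments.
Unset Strict Implicit.
Unset Printing Implicit Defensive.

Import Order.TTheory GRing.Theory Num.Theory.
Local Open Scope classical_set_scope.
Local Open Scope ring_scope.

(* Generic setting: scalar field K (K = R for real, K = R[i] for complex
   Hilbert spaces), theta : K -> K the conjugation of the Hermitian inner
   product (idfun resp. complex conjugation), re : K -> R the real part
   (id resp. complex.Re). *)

Definition ipnorm (R : realType) (K : numFieldType) (re : K -> R)
  (H : lmodType K) (dot : H -> H -> K) (x : H) : R :=
  Num.sqrt (re (dot x x)).

Definition reip (R : realType) (K : numFieldType) (re : K -> R)
  (H : lmodType K) (dot : H -> H -> K) (x z : H) : R :=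
  re (dot x z).

Definition ip_complete (R : realType) (K : numFieldType) (re : K -> R)
  (H : lmodType K) (dot : H -> H -> K) : Prop :=
  forall u : nat -> H,
    (forall e : R, 0 < e -> exists N : nat, forall m n : nat,
        (N <= m)%N -> (N <= n)%N -> ipnorm re dot (u m - u n) < e) ->
    exists l : H, forall e : R, 0 < e -> exists N : nat, forall n : nat,
        (N <= n)%N -> ipnorm re dot (u n - l) < e.

Definition ip_continuous (R : realType) (K : numFieldType) (re : K -> R)
  (H F : lmodType K) (dotH : H -> H -> K) (dotF : F -> F -> K) (M : H -> F) : Prop :=
  forall (x : H) (e : R), 0 < e -> exists2 d : R, 0 < d &
    forall y : H, ipnorm re dotH (y - x) < d -> ipnorm re dotF (M y - M x) < e.

Definition ip_closure (R : realType) (K : numFieldType) (re : K -> R)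
  (H : lmodType K) (dot : H -> H -> K) (A : set H) : set H :=
  [set x | forall e : R, 0 < e -> exists2 a, A a & ipnorm re dot (x - a) < e].

Definition conv_hull (K : numFieldType) (H : lmodType K) (A : set H) : set H :=
  [set x | exists (n : nat) (c : 'I_n -> K) (a : 'I_n -> H),
      [/\ forall i, 0 <= c i, \sum_(i < n) c i = 1, forall i, A (a i)
        & x = \sum_(i < n) c i *: a i]].

(* atomic norm ||x||_A = inf { t >= 0 : x in t . closure(conv A) },
   +oo when the set is empty (ereal_inf set0 = +oo) *)
Definition atomic_norm (R : realType) (K : numFieldType) (re : K -> R)
  (H : lmodType K) (dot : H -> H -> K) (A : set H) (x : H) : \bar R :=
  ereal_inf [set s : \bar R | exists t : K, [/\ s = (re t)%:E, 0 <= t &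
     exists2 y, ip_closure re dot (conv_hull A) y & x = t *: y]].

Definition sigma_norm (R : realType) (K : numFieldType) (re : K -> R)
  (H : lmodType K) (dot : H -> H -> K) (Sigma : set H) (x : H) : \bar R :=
  atomic_norm re dot [set y | Sigma y /\ ipnorm re dot y = 1] x.

Definition is_UoS (K : numFieldType) (H : lmodType K) (Sigma : set H) : Prop :=
  forall (t : K) (z : H), t \is Num.real -> Sigma z -> Sigma (t *: z).

Definition is_cone (K : numFieldType) (H : lmodType K) (Sigma : set H) : Prop :=
  forall (t : K) (z : H), 0 <= t -> Sigma z -> Sigma (t *: z).

Definition set_diff_minus (K : numFieldType) (H : lmodType K) (Sigma : set H) : set H :=
  [set y | exists x x', [/\ Sigma x, Sigma x' & y = x - x']].

Definition RIP (R : realType) (K : numFieldType) (re : K -> R)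
  (H F : lmodType K) (dotH : H -> H -> K) (dotF : F -> F -> K)
  (M : H -> F) (Sigma : set H) (delta : R) : Prop :=
  forall x, set_diff_minus Sigma x ->
    (1 - delta) * ipnorm re dotH x ^+ 2 <= ipnorm re dotF (M x) ^+ 2 /\
    ipnorm re dotF (M x) ^+ 2 <= (1 + delta) * ipnorm re dotH x ^+ 2.

Definition descent_set (R : realType) (K : numFieldType) (H : lmodType K)
  (f : H -> \bar R) (Sigma : set H) : set H :=
  [set z | exists2 x, Sigma x & (f (x + z)%R <= f x)%E].

(* delta_Sigma(x, z) (UoS formula if Sigma is a UoS, cone formula otherwise;
   read as 0 when ||x+z||_Sigma = +oo) *)
Definition delta_pt (R : realType) (K : numFieldType) (re : K -> R)
  (H : lmodType K) (dot : H -> H -> K) (Sigma : set H) (x z : H) : \bar R :=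
  let n := sigma_norm re dot Sigma (x + z) in
  let r := reip re dot x z in
  let nx := ipnorm re dot x in
  if n == +oo%E then 0%E
  else if `[< is_UoS Sigma >] then
    ((- r) / (nx * Num.sqrt (fine n ^+ 2 - nx ^+ 2 - 2 * r)))%:E
  else ((- (2 * r)) / (fine n ^+ 2 - 2 * r))%:E.

Definition admissible_const (R : realType) (K : numFieldType) (re : K -> R)
  (H : lmodType K) (dot : H -> H -> K) (f : H -> \bar R) (Sigma : set H) : \bar R :=
  ereal_inf [set s : \bar R | exists z : H,
     [/\ descent_set f Sigma z, z != 0 &
          s = ereal_sup [set d : \bar R | exists x : H,
                  [/\ Sigma x, x != 0 & d = delta_pt re dot Sigma x z]]]].

Definition recovery_statement (R : realType) (K : numFieldType)
  (theta : K -> K) (re : K -> R) : Prop :=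
  forall (H F : lmodType K) (dotH : {dot H for theta}) (dotF : {dot F for theta}),
    ip_complete re dotH -> ip_complete re dotF ->
  forall (Sigma : set H) (f : H -> \bar R),
    (is_UoS Sigma \/ is_cone Sigma) ->
    (forall x, f x != -oo%E) ->
    (forall x, Sigma x -> (f x < +oo)%E) ->
  forall (M : {linear H -> F}) (delta : R),
    ip_continuous re dotH dotF M ->
    RIP re dotH dotF M Sigma delta ->
    (delta%:E < admissible_const re dotH f Sigma)%E ->
  forall x0 : H, Sigma x0 ->
    (forall x : H, M x = M x0 -> (f x0 <= f x)%E) /\
    (forall x : H, M x = M x0 -> (f x <= f x0)%E -> x = x0).

(* Main.v *)
Require Import Defs.
From HB Require Import structures.
From mathcomp Require Import all_boot all_order all_algebra sesquilinear.
From mathcomp Require Import all_classical all_reals ereal.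
From mathcomp Require Import complex.
From mathcomp Require Import ring lra.
Import Order.TTheory GRing.Theory Num.Theory.
Local Open Scope classical_set_scope.
Local Open Scope ring_scope.

Lemma discr (R : realFieldType) (a b c : R) : 0 <= a ->
  (forall s, 0 <= a * s ^+ 2 + b * s + c) -> b ^+ 2 <= 4 * a * c.
Proof.
move=> a0 H; have [aeq|a_gt0] := eqVneq a 0.
  subst a; have [b0|bn0] := eqVneq b 0; first by rewrite b0 mulr0 mul0r expr0n.
  have := H (- (c + 1) / b); rewrite mul0r add0r mulrCA divff // mulr1.
  lra.
have ap : 0 < a by rewrite lt_def a_gt0.
have := H (- b / (2 * a)).
have -> : a * (- b / (2 * a)) ^+ 2 + b * (- b / (2 * a)) + c
        = (4 * a * c - b ^+ 2) / (4 * a) by field; rewrite a_gt0.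
rewrite pmulr_lge0 ?invr_gt0 ?mulr_gt0 //; lra.
Qed.

Lemma inf_quad (R : realType) (S : set (\bar R)) (al be : R) : 0 <= al ->
  (forall s, S s -> exists T : R, [/\ s = T%:E, 0 <= T & 0 <= al * T ^+ 2 + be]) ->
  ereal_inf S != +oo%E ->
  exists n : R, [/\ ereal_inf S = n%:E, 0 <= n & 0 <= al * n ^+ 2 + be].
Proof.
move=> al0 hS ninf.
have [s0 Ss0] : exists s, S s.
  apply/not_existsP => hne; move: ninf; suff -> : S = set0 by rewrite ereal_inf0.
  by apply/seteqP; split => // s Ss; exact: (hne s).
have [T0 [eT0 T00 hT0]] := hS _ Ss0.
have lb0 : (0%:E <= ereal_inf S)%E.
  apply: le_ereal_inf_tmp => s Ss; have [T [-> Tp _]] := hS s Ss; by rewrite lee_fin.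
have ub0 : (ereal_inf S <= T0%:E)%E.
  by rewrite -eT0; exact: ereal_inf_lbound.
case En: (ereal_inf S) lb0 ub0 ninf => [n| |] //= lb0 ub0 _.
exists n; split; [by [] | by rewrite -lee_fin | ].
have [al_eq|al_gt0] := eqVneq al 0.
  by move: hT0; rewrite al_eq !mul0r !add0r.
have alp : 0 < al by rewrite lt_def al_gt0.
set L := Num.sqrt (Num.max 0 (- be / al)).
have hL : forall T, 0 <= T -> 0 <= al * T ^+ 2 + be -> L <= T.
  move=> T Tp hT; rewrite /L -(ger0_norm Tp) -sqrtr_sqr ler_wsqrtr //.
  rewrite ge_max sqr_ge0 /= ler_pdivrMr //; lra.
have : (L%:E <= ereal_inf S)%E.
  apply: le_ereal_inf_tmp => s Ss; have [T [-> Tp hT]] := hS s Ss; by rewrite lee_fin hL.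
rewrite En lee_fin => Ln.
have L0 : 0 <= L by rewrite sqrtr_ge0.
have : L ^+ 2 <= n ^+ 2 by rewrite ler_sqr ?nnegrE // -lee_fin.
rewrite sqr_sqrtr ?le_max ?lexx // ge_max => /andP[_].
rewrite ler_pdivrMr //; lra.
Qed.

Lemma fin_uos (R : realType) (d a n r : R) : 0 <= d -> 0 < a ->
  0 <= d ^+ 2 * a ^+ 2 * n ^+ 2 + (- (d ^+ 2 * a ^+ 2 * (a ^+ 2 + 2 * r)) - r ^+ 2) ->
  (- r) / (a * Num.sqrt (n ^+ 2 - a ^+ 2 - 2 * r)) <= d.
Proof.
move=> d0 a0 h; set D := n ^+ 2 - a ^+ 2 - 2 * r.
have h' : r ^+ 2 <= d ^+ 2 * a ^+ 2 * D by rewrite /D; lra.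
have [rp|rn] := lerP (- r) 0.
  apply: le_trans d0; apply: mulr_le0_ge0 => //.
  by rewrite invr_ge0 mulr_ge0 ?sqrtr_ge0 ?ltW.
have Dp : 0 < D.
  rewrite ltNge; apply/negP => D0.
  have : d ^+ 2 * a ^+ 2 * D <= 0 by apply: mulr_ge0_le0 => //; apply: mulr_ge0; apply: sqr_ge0.
  have : 0 < r ^+ 2 by rewrite -sqrrN exprn_gt0.
  lra.
have sD : 0 < Num.sqrt D by rewrite sqrtr_gt0.
rewrite ler_pdivrMr ?mulr_gt0 //.
have nn1 : 0 <= - r by exact: ltW.
have nn2 : 0 <= d * (a * Num.sqrt D).
  by apply: mulr_ge0 => //; apply: mulr_ge0; apply: ltW.
rewrite -ler_sqr ?nnegrE //.
rewrite sqrrN !exprMn sqr_sqrtr; [by rewrite mulrA | exact: ltW].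
Qed.

Lemma fin_cone (R : realType) (d A2 n r : R) : 0 <= d -> 0 < A2 ->
  0 <= 1 * n ^+ 2 + - (A2 + 2 * r) ->
  0 <= d * n ^+ 2 + 2 * (1 - d) * r -> (- (2 * r)) / (n ^+ 2 - 2 * r) <= d.
Proof.
move=> d0 a0 h1 h2.
have Dp : 0 < n ^+ 2 - 2 * r by lra.
rewrite ler_pdivrMr //; lra.
Qed.

Lemma lin_subst (R : realType) (T p q w1 w2 k l1 l2 c1 c2 : R) : T * p = w1 -> T * q = w2 ->
  l1 = c1 * T -> l2 = c2 * T -> 0 <= k + l1 * p + l2 * q -> 0 <= k + c1 * w1 + c2 * w2.
Proof. by move=> <- <- -> ->; rewrite !mulrA. Qed.

Section Gen.
Variables (R : realType) (K : numFieldType) (theta : K -> K) (re : K -> R).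
Hypothesis reD : forall a b, re (a + b) = re a + re b.
Hypothesis reM : forall c a, c \is Num.real -> re (c * a) = re c * re a.
Hypothesis re1 : re 1 = 1.
Hypothesis re_theta : forall a, re (theta a) = re a.
Hypothesis theta_real : forall c, c \is Num.real -> theta c = c.
Hypothesis re_ge0 : forall a, 0 <= a -> 0 <= re a.
Hypothesis re_gt0 : forall a, 0 < a -> 0 < re a.
Hypothesis re_surj : forall b : R, exists2 k : K, k \is Num.real & re k = b.

Lemma re0 : re 0 = 0.
Proof. by have := reD 0 0; rewrite addr0 => /eqP; rewrite -subr_eq subrr eq_sym => /eqP. Qed.
Lemma reN a : re (- a) = - re a.
Proof. by apply/eqP; rewrite -subr_eq0 opprK -reD addNr re0. Qed.
Lemma reB a b : re (a - b) = re a - re b.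
Proof. by rewrite reD reN. Qed.
Lemma re_sum n (F : 'I_n -> K) : re (\sum_(i < n) F i) = \sum_(i < n) re (F i).
Proof.
elim: n F => [|n IH] F; first by rewrite !big_ord0 re0.
by rewrite !big_ord_recr /= reD IH.
Qed.

Section Form.
Variables (H : lmodType K) (dot : {dot H for theta}).
Definition P (u v : H) := re (dot u v).
Lemma PDl u v w : P (u + v) w = P u w + P v w.
Proof. by rewrite /P linearDl reD. Qed.
Lemma PDr u v w : P u (v + w) = P u v + P u w.
Proof. by rewrite /P linearDr reD. Qed.
Lemma PNl u w : P (- u) w = - P u w.
Proof. by rewrite /P linearNl reN. Qed.
Lemma PNr u w : P u (- w) = - P u w.
Proof. by rewrite /P linearNr reN. Qed.
Lemma PBl u v w : P (u - v) w = P u w - P v w.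
Proof. by rewrite PDl PNl. Qed.
Lemma PBr u v w : P u (v - w) = P u v - P u w.
Proof. by rewrite PDr PNr. Qed.
Lemma PZl c u v : c \is Num.real -> P (c *: u) v = re c * P u v.
Proof. by move=> cr; rewrite /P linearZl_LR reM. Qed.
Lemma PZr c u v : c \is Num.real -> P u (c *: v) = re c * P u v.
Proof. by move=> cr; rewrite /P linearZr_LR /= theta_real // reM. Qed.
Lemma PC u v : P u v = P v u.
Proof.
rewrite /P; have := @hermitian_subproof _ _ _ _ dot u v.
by rewrite expr0 mul1r => ->; rewrite re_theta.
Qed.
Lemma P_ge0 u : 0 <= P u u.
Proof.
rewrite /P; case: (eqVneq u 0) => [->|h]; first by rewrite linear0l re0.
exact/re_ge0/ltW/neq0_dnorm_gt0.
Qed.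
Lemma P_gt0 u : u != 0 -> 0 < P u u.
Proof. by move=> h; apply/re_gt0/neq0_dnorm_gt0. Qed.

Lemma ipnormE u : ipnorm re dot u = Num.sqrt (P u u). Proof. by []. Qed.
Lemma ipnorm_sq u : ipnorm re dot u ^+ 2 = P u u.
Proof. by rewrite ipnormE sqr_sqrtr // P_ge0. Qed.
Lemma ipnorm_ge0 u : 0 <= ipnorm re dot u.
Proof. by rewrite ipnormE sqrtr_ge0. Qed.
Lemma ipnormN u : ipnorm re dot (- u) = ipnorm re dot u.
Proof. by rewrite !ipnormE PNl PNr opprK. Qed.

Lemma P_exp s k u v : s \is Num.real -> k \is Num.real ->
  P (s *: u + k *: v) (s *: u + k *: v) =
  re s ^+ 2 * P u u + 2 * re s * re k * P u v + re k ^+ 2 * P v v.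
Proof.
move=> sr kr; rewrite !PDl !PDr !PZl // !PZr // (PC v u); ring.
Qed.

Lemma CS u v : P u v ^+ 2 <= P u u * P v v.
Proof.
have := @discr _ (P v v) (2 * P u v) (P u u) (P_ge0 v).
have h : forall s, 0 <= P v v * s ^+ 2 + 2 * P u v * s + P u u.
  move=> s; have [k kr <-] := re_surj s.
  have := P_ge0 (1 *: u + k *: v); rewrite P_exp ?real1 // re1; lra.
move=> /(_ h); lra.
Qed.

Lemma CSabs u v : `|P u v| <= ipnorm re dot u * ipnorm re dot v.
Proof.
rewrite -ler_sqr ?nnegrE ?mulr_ge0 ?ipnorm_ge0 //.
by rewrite real_normK ?num_real // exprMn !ipnorm_sq CS.
Qed.

End Form.
Arguments P {H} dot u v.

Lemma P_suml (H : lmodType K) (dot : {dot H for theta}) n (G : 'I_n -> H) w :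
  P dot (\sum_(i < n) G i) w = \sum_(i < n) P dot (G i) w.
Proof.
elim: n G => [|n IH] G; first by rewrite !big_ord0 /P linear0l re0.
by rewrite !big_ord_recr /= PDl IH.
Qed.

Section Two.
Variables (H F : lmodType K) (dotH : {dot H for theta}) (dotF : {dot F for theta}).
Variable M : {linear H -> F}.

Lemma conv_step (A : set H) x v k l1 l2 a :
  (forall a', A a' -> 0 <= k + l1 * P dotH a' x + l2 * P dotF (M a') v) ->
  conv_hull A a -> 0 <= k + l1 * P dotH a x + l2 * P dotF (M a) v.
Proof.
move=> hA [n [c [b [c0 csum bA ->]]]].
have cr i : c i \is Num.real by apply: ger0_real.
have sre : \sum_(i < n) re (c i) = 1 by rewrite -re_sum csum re1.
have -> : k + l1 * P dotH (\sum_(i < n) c i *: b i) x +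
    l2 * P dotF (M (\sum_(i < n) c i *: b i)) v =
    \sum_(i < n) re (c i) * (k + l1 * P dotH (b i) x + l2 * P dotF (M (b i)) v).
  rewrite linear_sum P_suml P_suml.
  under eq_bigr do rewrite PZl //.
  have -> : \sum_(i < n) P dotF (M (c i *: b i)) v =
            \sum_(i < n) re (c i) * P dotF (M (b i)) v.
    by apply: eq_bigr => i _; rewrite linearZ /= PZl.
  transitivity (k * (\sum_(i < n) re (c i)) + l1 * (\sum_i re (c i) * P dotH (b i) x) +
     l2 * (\sum_(i < n) re (c i) * P dotF (M (b i)) v)); first by rewrite sre mulr1.
  rewrite !mulr_sumr -!big_split /=.
  by apply: eq_bigr => i _; ring.
by apply: sumr_ge0 => i _; rewrite mulr_ge0 ?re_ge0 ?hA.
Qed.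


Lemma small_term (l p na nx e : R) : `|p| <= na * nx -> 0 <= na -> 0 <= nx -> 0 < e ->
  na < e / (2 * (`|l| * nx + 1)) -> l * p <= e / 2.
Proof.
move=> hp na0 nx0 e0; set c := `|l| * nx + 1.
have c0 : 0 < c by rewrite /c ltr_wpDl ?mulr_ge0.
rewrite ltr_pdivlMr ?mulr_gt0 // => hna.
have h1 : l * p <= `|l| * (na * nx).
  by apply: le_trans (ler_norm _) _; rewrite normrM ler_wpM2l.
have h2 : `|l| * (na * nx) <= na * c.
  by rewrite mulrCA ler_wpM2l // /c lerDl.
rewrite ler_pdivlMr //; lra.
Qed.

Lemma conv_lim (A : set H) x v k l1 l2 y :
  ip_continuous re dotH dotF M ->
  (forall a', A a' -> 0 <= k + l1 * P dotH a' x + l2 * P dotF (M a') v) ->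
  ip_closure re dotH (conv_hull A) y -> 0 <= k + l1 * P dotH y x + l2 * P dotF (M y) v.
Proof.
move=> Mc hA cy.
suff hh : forall e, 0 < e -> - e <= k + l1 * P dotH y x + l2 * P dotF (M y) v.
  rewrite leNgt; apply/negP => hlt.
  have := hh (- (k + l1 * P dotH y x + l2 * P dotF (M y) v) / 2).
  have : 0 < - (k + l1 * P dotH y x + l2 * P dotF (M y) v) / 2.
    by rewrite divr_gt0 // oppr_gt0.
  move=> /[dup] h0 /[swap] /[apply]; lra.
move=> e e0.
set c1 := `|l1| * ipnorm re dotH x + 1.
set c2 := `|l2| * ipnorm re dotF v + 1.
have c1p : 0 < c1 by rewrite /c1 ltr_wpDl ?mulr_ge0 ?ipnorm_ge0.
have c2p : 0 < c2 by rewrite /c2 ltr_wpDl ?mulr_ge0 ?ipnorm_ge0.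
have [d d0 hd] := Mc y (e / (2 * c2)) (divr_gt0 e0 (mulr_gt0 (ltr0n _ 2) c2p)).
have m0 : 0 < Num.min d (e / (2 * c1)).
  by rewrite lt_min d0 divr_gt0 // mulr_gt0.
have [a ca ha] := cy _ m0.
have ha' : ipnorm re dotH (a - y) < Num.min d (e / (2 * c1)).
  by rewrite -opprB ipnormN.
rewrite lt_min in ha'; case/andP: ha' => ha1 ha2.
have hb := hd a ha1.
have pa := @conv_step A x v k l1 l2 a hA ca.
have t1 : l1 * P dotH (a - y) x <= e / 2.
  by apply: (@small_term l1 _ _ _ e (CSabs _ dotH (a - y) x)); rewrite ?ipnorm_ge0.
have t2 : l2 * P dotF (M a - M y) v <= e / 2.
  by apply: (@small_term l2 _ _ _ e (CSabs _ dotF (M a - M y) v)); rewrite ?ipnorm_ge0.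
move: t1 t2; rewrite PBl PBl; lra.
Qed.

Variable (Sig : set H) (delta : R).
Hypothesis hRIP : RIP re dotH dotF M Sig delta.

Lemma rip2 y : set_diff_minus Sig y ->
  (1 - delta) * P dotH y y <= P dotF (M y) (M y) /\
  P dotF (M y) (M y) <= (1 + delta) * P dotH y y.
Proof. by move/hRIP; rewrite !ipnorm_sq. Qed.

Lemma M_comb s k u w : M (s *: u + k *: w) = s *: M u + k *: M w.
Proof. by rewrite linearD !linearZ. Qed.

Lemma atom_uos x a t b : is_UoS Sig -> Sig x -> Sig a -> P dotH a a = 1 ->
  0 <= t -> b \is Num.real ->
  0 <= ((1 + delta) * (re t ^+ 2 + re b ^+ 2 * P dotH x x)
          - (1 - delta) * (re t ^+ 2 + (re b + 1 + 1) ^+ 2 * P dotH x x)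
        + (4 * re b + 4) * P dotF (M x) (M x))
     + (2 * re t * (re b * (1 + delta) + (re b + 1 + 1) * (1 - delta))) * P dotH a x
     + (- (2 * re t * (2 * re b + 2))) * P dotF (M a) (M x).
Proof.
move=> U Sx Sa Pa t0 br.
set T := re t; set be := re b; set ga := be + 1 + 1.
set A2 := P dotH x x; set X := P dotF (M x) (M x).
have tr : t \is Num.real by apply: ger0_real.
have gr : - (b + 1 + 1) \is Num.real by rewrite rpredN !rpredD ?real1.
have S1 : set_diff_minus Sig (t *: a + b *: x).
  exists (t *: a), ((- b) *: x); split; [exact: U | by apply: (U _ _ _ Sx); rewrite rpredN | ].
  by rewrite scaleNr opprK.
have S2 : set_diff_minus Sig (t *: a + (- (b + 1 + 1)) *: x).
  exists (t *: a), ((b + 1 + 1) *: x); split; [exact: U | | ].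
    by apply: (U _ _ _ Sx); rewrite !rpredD ?real1.
  by rewrite scaleNr.
have [_ h1] := rip2 _ S1; have [h2 _] := rip2 _ S2.
move: h1 h2; rewrite !M_comb !P_exp // ?rpredN // !reN !reD re1 Pa -/T -/be.
move=> h1 h2; rewrite -subr_ge0 in h1; rewrite -subr_ge0 in h2.
apply: (le_trans (addr_ge0 h1 h2)).
rewrite le_eqVlt; apply/orP; left; apply/eqP; rewrite /ga /A2 /X; ring.
Qed.

Lemma atom_cone x a t : is_cone Sig -> Sig x -> Sig a -> P dotH a a = 1 -> 0 <= t ->
  0 <= ((1 + delta) * re t ^+ 2 - (1 - delta) * (re t ^+ 2 + 4 * P dotH x x)
          + 4 * P dotF (M x) (M x))
     + (4 * re t * (1 - delta)) * P dotH a x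
     + (- (4 * re t)) * P dotF (M a) (M x).
Proof.
move=> C Sx Sa Pa t0.
set T := re t.
set A2 := P dotH x x; set X := P dotF (M x) (M x).
have tr : t \is Num.real by apply: ger0_real.
have gr : - (1 + 1 : K) \is Num.real.
  by rewrite realN; apply: ger0_real; rewrite addr_ge0 ?ler01.
have S1 : set_diff_minus Sig (t *: a + 0 *: x).
  exists (t *: a), (0 *: x); split; [exact: C | exact: C | ].
  by rewrite !scale0r subr0 addr0.
have S2 : set_diff_minus Sig (t *: a + (- (1 + 1)) *: x).
  exists (t *: a), ((1 + 1) *: x); split; [exact: C | | ].
    by apply: (C _ _ _ Sx); rewrite addr_ge0 ?ler01.
  by rewrite scaleNr.
have [_ h1] := rip2 _ S1; have [h2 _] := rip2 _ S2.
move: h1 h2; rewrite !M_comb !P_exp ?real0 // !reN !reD re1 re0 Pa -/T.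
move=> h1 h2; rewrite -subr_ge0 in h1; rewrite -subr_ge0 in h2.
apply: (le_trans (addr_ge0 h1 h2)).
rewrite le_eqVlt; apply/orP; left; apply/eqP; rewrite /A2 /X; ring.
Qed.


Lemma delta_ge0 x : (is_UoS Sig \/ is_cone Sig) -> Sig x -> x != 0 -> 0 <= delta.
Proof.
move=> hUC Sx x0.
have S0 : Sig 0.
  case: hUC => [U|C]; rewrite -(scale0r x); [apply: U => //; exact: real0 | exact: C].
have Sd : set_diff_minus Sig x by exists x, 0; split => //; rewrite subr0.
have [h1 h2] := rip2 _ Sd.
have Ap := P_gt0 _ dotH x x0.
have : 0 <= delta * (2 * P dotH x x) by lra.
by rewrite pmulr_lge0 // mulr_gt0.
Qed.

Hypothesis Mc : ip_continuous re dotH dotF M.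

Lemma norm_le (A : set H) y : (forall a, A a -> P dotH a a = 1) ->
  ip_closure re dotH (conv_hull A) y -> P dotH y y <= 1.
Proof.
move=> hA cy.
have := @conv_lim A y 0 (ipnorm re dotH y) (-1) 0 y Mc _ cy.
rewrite mul0r addr0 mulN1r -ipnorm_sq.
have n0 := ipnorm_ge0 _ dotH y.
move=> /(_ _) h.
have {}h : ipnorm re dotH y ^+ 2 <= ipnorm re dotH y.
  rewrite -subr_ge0; apply: h => a Aa.
  rewrite mul0r addr0 mulN1r subr_ge0.
  apply: le_trans (ler_norm _) _; apply: le_trans (CSabs _ dotH a y) _.
  by rewrite ipnormE hA // sqrtr1 mul1r.
nra.
Qed.

Lemma elem_facts x z t y : M z = 0 ->
  ip_closure re dotH (conv_hull [set u | Sig u /\ ipnorm re dotH u = 1]) y ->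
  x + z = t *: y -> 0 <= t ->
  [/\ re t * P dotH y x = P dotH x x + P dotH x z,
      re t * P dotF (M y) (M x) = P dotF (M x) (M x) &
      P dotH x x + 2 * P dotH x z <= re t ^+ 2].
Proof.
move=> Mz cy exz t0.
have tr : t \is Num.real by apply: ger0_real.
have hA : forall a, [set u | Sig u /\ ipnorm re dotH u = 1] a -> P dotH a a = 1.
  by move=> a [_ h]; rewrite -ipnorm_sq h expr1n.
split.
- by rewrite -PZl // -exz PDl (PC _ dotH z x).
- by rewrite -PZl // -linearZ /= -exz linearD Mz addr0.
- have := @norm_le _ y hA cy.
  have : P dotH (x + z) (x + z) = re t ^+ 2 * P dotH y y.
    by rewrite exz PZl // PZr // mulrA expr2.
  rewrite PDl !PDr (PC _ dotH z x) => e.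
  have := P_ge0 _ dotH z => hz hy.
  have : re t ^+ 2 * P dotH y y <= re t ^+ 2 by rewrite ler_piMr ?sqr_ge0.
  lra.
Qed.


Local Notation Aset := [set u | Sig u /\ ipnorm re dotH u = 1].

Lemma hAset a : Aset a -> P dotH a a = 1.
Proof. by move=> [_ h]; rewrite -ipnorm_sq h expr1n. Qed.

Lemma uos_elem x z t y : 0 <= delta -> is_UoS Sig -> Sig x -> M z = 0 ->
  ip_closure re dotH (conv_hull Aset) y -> x + z = t *: y -> 0 <= t ->
  0 <= (delta ^+ 2 * P dotH x x) * re t ^+ 2 +
       (- (delta ^+ 2 * P dotH x x * (P dotH x x + 2 * P dotH x z)) - P dotH x z ^+ 2).
Proof.
move=> d0 U Sx Mz cy exz t0.
have [e1 e2 _] := @elem_facts x z t y Mz cy exz t0.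
set T := re t in e1 e2 *; set A2 := P dotH x x in e1 *.
set r := P dotH x z in e1 *; set X := P dotF (M x) (M x) in e2 *.
have Q : forall u : R, 0 <= (delta * A2) * u ^+ 2 + (2 * r) * u +
                             (delta * T ^+ 2 - delta * A2 - 2 * r * delta).
  move=> u; have [b br rb] := re_surj (u - 1).
  have H0 := @conv_lim Aset x (M x) _ _ _ y Mc
    (fun a Aa => @atom_uos x a t b U Sx (proj1 Aa) (hAset a Aa) t0 br) cy.
  have r1 : forall c (p : R), 2 * re t * c * p = 2 * c * (re t * p) by move=> c p; ring.
  have r2 : forall c (p : R), - (2 * re t * c) * p = - (2 * c) * (re t * p).
    by move=> c p; ring.
  rewrite r1 r2 -/T e1 e2 rb in H0.
  have E : forall w : R, w = 2 * ((delta * A2) * u ^+ 2 + (2 * r) * u +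
                             (delta * T ^+ 2 - delta * A2 - 2 * r * delta)) -> 0 <= w ->
     0 <= (delta * A2) * u ^+ 2 + (2 * r) * u +
                             (delta * T ^+ 2 - delta * A2 - 2 * r * delta).
    by move=> w -> hw; lra.
  by apply: (E _ _ H0); rewrite /A2 /X; ring.
have := @discr _ _ _ _ (mulr_ge0 d0 (P_ge0 _ dotH x)) Q.
rewrite -subr_ge0 => hd.
have E : forall w v : R, v = w * 4 -> 0 <= v -> 0 <= w.
  by move=> w v -> hv; rewrite -(pmulr_lge0 _ (ltr0n R 4)).
by apply: (E _ _ _ hd); rewrite /A2 /r /T; ring.
Qed.


Lemma cone_elem x z t y : is_cone Sig -> Sig x -> M z = 0 ->
  ip_closure re dotH (conv_hull Aset) y -> x + z = t *: y -> 0 <= t ->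
  0 <= delta * re t ^+ 2 + 2 * (1 - delta) * P dotH x z.
Proof.
move=> C Sx Mz cy exz t0.
have [e1 e2 _] := @elem_facts x z t y Mz cy exz t0.
set T := re t in e1 e2 *; set A2 := P dotH x x in e1 *.
set r := P dotH x z in e1 *; set X := P dotF (M x) (M x) in e2 *.
have H0 := @conv_lim Aset x (M x) _ _ _ y Mc
  (fun a Aa => @atom_cone x a t C Sx (proj1 Aa) (hAset a Aa) t0) cy.
have r1 : forall c (p : R), 4 * re t * c * p = 4 * c * (re t * p) by move=> c p; ring.
have r2 : forall (p : R), - (4 * re t) * p = - 4 * (re t * p) by move=> p; ring.
rewrite r1 r2 -/T e1 e2 in H0.
have E : forall w : R, w = 2 * (delta * T ^+ 2 + 2 * (1 - delta) * r) -> 0 <= w ->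
   0 <= delta * T ^+ 2 + 2 * (1 - delta) * r.
  by move=> w -> hw; lra.
by apply: (E _ _ H0); rewrite /A2 /X; ring.
Qed.

Lemma norm_elem x z t y : M z = 0 ->
  ip_closure re dotH (conv_hull Aset) y -> x + z = t *: y -> 0 <= t ->
  0 <= 1 * re t ^+ 2 + - (P dotH x x + 2 * P dotH x z).
Proof.
move=> Mz cy exz t0; have [_ _ h] := @elem_facts x z t y Mz cy exz t0; lra.
Qed.

Lemma key x z : (is_UoS Sig \/ is_cone Sig) -> Sig x -> x != 0 -> M z = 0 ->
  (delta_pt re dotH Sig x z <= delta%:E)%E.
Proof.
move=> hUC Sx x0 Mz.
have d0 := delta_ge0 x hUC Sx x0.
rewrite /delta_pt.
case: eqP => [_|nfin]; first by rewrite lee_fin.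
have nfin' : sigma_norm re dotH Sig (x + z) != +oo%E by apply/eqP.
have Ap := P_gt0 _ dotH x x0.
have hel : forall (al be : R) , 0 <= al ->
   (forall t y, ip_closure re dotH (conv_hull Aset) y -> x + z = t *: y -> 0 <= t ->
      0 <= al * re t ^+ 2 + be) ->
   exists n : R, [/\ sigma_norm re dotH Sig (x + z) = n%:E, 0 <= n &
                     0 <= al * n ^+ 2 + be].
  move=> al be al0 hh; apply: inf_quad => // s [t [-> t0 [y cy exz]]].
  exists (re t); split => //; first exact: re_ge0.
  exact: (hh t y cy exz t0).
have [n1 [En1 n10 hn1]] := hel 1 _ ler01 (fun t y cy exz t0 => @norm_elem x z t y Mz cy exz t0).
rewrite En1 /=.
case: asboolP => [U|nU]; rewrite lee_fin.
  have [n2 [En2 n20 hn2]] := hel _ _ (mulr_ge0 (sqr_ge0 delta) (P_ge0 _ dotH x))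
     (fun t y cy exz t0 => @uos_elem x z t y d0 U Sx Mz cy exz t0).
  move: En2; rewrite En1 => -[en]; rewrite -en in hn2.
  rewrite /reip -[re (dotH x z)]/(P dotH x z).
  apply: fin_uos => //; first by rewrite ipnormE sqrtr_gt0.
  by rewrite ipnorm_sq.
have C : is_cone Sig by case: hUC.
have [n2 [En2 n20 hn2]] := hel _ _ d0
   (fun t y cy exz t0 => @cone_elem x z t y C Sx Mz cy exz t0).
move: En2; rewrite En1 => -[en]; rewrite -en in hn2.
rewrite /reip -[re (dotH x z)]/(P dotH x z).
exact: (@fin_cone _ _ _ _ _ d0 Ap hn1 hn2).
Qed.

End Two.

Lemma recovery_gen : recovery_statement theta re.
Proof.
move=> H F dotH dotF _ _ Sig f hUC _ _ M delta Mc hRIP hlt x0 Sx0.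
have part2 : forall x, M x = M x0 -> (f x <= f x0)%E -> x = x0.
  move=> x Mx hf; case: (eqVneq x x0) => // ne.
  set z := x - x0.
  have z0 : z != 0 by rewrite subr_eq0.
  have Dz : descent_set f Sig z by exists x0 => //; rewrite /z addrC subrK.
  have Mz : M z = 0 by rewrite /z linearB /= Mx subrr.
  have : (admissible_const re dotH f Sig <= delta%:E)%E.
    apply: ge_ereal_inf.
    exists (ereal_sup [set d : \bar R | exists x : H,
                  [/\ Sig x, x != 0 & d = delta_pt re dotH Sig x z]]).
      by exists z; split.
    apply: ge_ereal_sup => d [x' [Sx' x'0 ->]].
    exact: (@key H F dotH dotF M Sig delta hRIP Mc x' z hUC Sx' x'0 Mz).
  by rewrite leNgt hlt.
split => // x Mx.
rewrite leNgt; apply/negP => hlt'.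
have e := part2 x Mx (ltW hlt').
by move: hlt'; rewrite e ltxx.
Qed.

End Gen.

Local Open Scope complex_scope.

Section C.
Variable R : realType.
Lemma cD (a b : R[i]) : complex.Re (a + b) = complex.Re a + complex.Re b.
Proof. by case: a; case: b. Qed.
Lemma cM (c a : R[i]) : c \is Num.real -> complex.Re (c * a) = complex.Re c * complex.Re a.
Proof. move/complex_realP=> [k ->]; case: a => a1 a2 /=. by rewrite mul0r subr0. Qed.
Lemma c1 : complex.Re (1 : R[i]) = 1. Proof. by []. Qed.
Lemma cth (a : R[i]) : complex.Re (Num.conj a) = complex.Re a. Proof. by case: a. Qed.
Lemma cthr (c : R[i]) : c \is Num.real -> Num.conj c = c.
Proof. move/complex_realP=> [k ->]. exact: conjc_real. Qed.
Lemma cge0 (a : R[i]) : 0 <= a -> 0 <= complex.Re a.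
Proof. by rewrite lecE => /andP[]. Qed.
Lemma cgt0 (a : R[i]) : 0 < a -> 0 < complex.Re a.
Proof. by rewrite ltcE => /andP[]. Qed.
Lemma csurj (b : R) : exists2 k : R[i], k \is Num.real & complex.Re k = b.
Proof. exists b%:C => //; apply/complex_realP; by exists b. Qed.
End C.

Theorem theorem1 :
  (forall R : realType, recovery_statement (K := R) idfun (fun t : R => t)) /\
  (forall R : realType, recovery_statement (K := R[i]) Num.conj (@complex.Re R)).
Proof.
split=> R.
- apply: recovery_gen => //.
  by move=> b; exists b => //; exact: num_real.
- apply: recovery_gen.
  + exact: cD.
  + exact: cM.
  + exact: c1.
  + exact: cth.
  + exact: cthr.
  + exact: cge0.
  + exact: cgt0.
  + exact: csurj.
Qed.
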